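(* Let $\Gamma\subset U_+$ be a non-commutative, torsion-free complex Kleinian group and let $\Gamma_p$ be the subgroup of $\Gamma$ generated by all parabolic elements of $\Gamma$. Suppose $\Gamma_p$ is conjugate in $\mathrm{PSL}(3,\mathbb{C})$ to a group $$\Gamma_{\mathbf{w}}=\left\langle g_{1,0},\ g_{c,d},\ \begin{bmatrix}1&x&y\\0&1&1\\0&0&1\end{bmatrix}\right\rangle,\qquad g_{s,t}=\begin{bmatrix}1&s&t\\0&1&0\\0&0&1\end{bmatrix},$$ where $\mathbf{w}=(x,y,p,q,r)$ with $x,y\in\mathbb{C}$, $p,q,r\in\mathbb{Z}$, $p,q$ coprime, $q^2$ divides $r$, $c=pq^{-1}$ and $d=r^{-1}$. If $\mathrm{rank}(\Gamma_{\mathbf{w}})=3$, then $\Gamma$ contains no loxodromic elements.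
   Context: $U_+\subset\mathrm{PSL}(3,\mathbb{C})$ is the subgroup of elements admitting an upper triangular lift in $\mathrm{SL}(3,\mathbb{C})$. A complex Kleinian group is a discrete subgroup of $\mathrm{PSL}(3,\mathbb{C})$ acting properly discontinuously on some nonempty open invariant subset of $\mathbb{CP}^2$. An element of $\mathrm{PSL}(3,\mathbb{C})$ is parabolic if it has a non-diagonalizable lift in $\mathrm{SL}(3,\mathbb{C})$ all of whose eigenvalues have modulus $1$, and loxodromic if it has a lift in $\mathrm{SL}(3,\mathbb{C})$ with an eigenvalue of modulus different from $1$. Torsion-free means the only element of finite order is the identity. The rank of a finitely generated group is its minimal number of generators. *)

(* Defs.v *)
From HB Require Import structures.
From mathcomp Require Import all_boot all_order all_algebra.
From mathcomp Require Import all_classical all_reals all_analysis.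
From mathcomp Require Import complex.
Import Order.TTheory GRing.Theory Num.Theory.
Import numFieldTopology.Exports.
Import numFieldNormedType.Exports.

Set Implicit Arguments.
Unset Strict Implicit.
Unset Printing Implicit Defensive.

Local Open Scope ring_scope.
Local Open Scope classical_set_scope.

(* The complex numbers are R[i] for R : realType.  We equip R[i] with its
   usual (norm-induced) topology; 'M[R[i]]_(m,n) then gets the product
   topology, i.e. the usual topology of C^(m*n). *)
HB.instance Definition _ (R : realType) :=
  PseudoPointedMetric.copy (R[i]) ((R[i])^o).

Notation mx3 R := ('M[(R[i])]_3).
Notation cv3 R := ('cV[(R[i])]_3).

(* A subgroup Gamma of PSL(3,C) is represented by
   its full preimage in GL(3,C) : a set of invertible matrices containing all
   nonzero scalar matrices and closed under products and inverses.  Two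
   matrices represent the same element of PSL(3,C) iff [peq]. *)

Definition peq (R : realType) (A B : mx3 R) : Prop :=
  exists l : R[i], l != 0 /\ A = l *: B.

Definition is_pgroup (R : realType) (G : set (mx3 R)) : Prop :=
  [/\ (forall A, G A -> A \in unitmx),
      (forall a : R[i], a != 0 -> G a%:M),
      (forall A B, G A -> G B -> G (A *m B)) &
      (forall A, G A -> G (invmx A))].

(* The subgroup of PSL(3,C) generated by (the classes of) a set S of
   invertible matrices, represented by its full preimage. *)
Inductive pgen (R : realType) (S : set (mx3 R)) : mx3 R -> Prop :=
| pgen_scalar (a : R[i]) : a != 0 -> pgen S a%:M
| pgen_gen A : S A -> pgen S A
| pgen_mul A B : pgen S A -> pgen S B -> pgen S (A *m B)
| pgen_inv A : pgen S A -> pgen S (invmx A).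

Definition SL_lift (R : realType) (A B : mx3 R) : Prop :=
  \det B = 1 /\ exists l : R[i], B = l *: A.

Definition upper_triangular (R : realType) (B : mx3 R) : Prop :=
  forall i j : 'I_3, (j < i)%N -> B i j = 0.

Definition in_Uplus (R : realType) (A : mx3 R) : Prop :=
  exists B, SL_lift A B /\ upper_triangular B.

Definition parabolic (R : realType) (A : mx3 R) : Prop :=
  exists B, SL_lift A B /\ ~ diagonalizable B /\
    (forall a : R[i], eigenvalue B a -> `|a| = 1).

Definition loxodromic (R : realType) (A : mx3 R) : Prop :=
  exists B, SL_lift A B /\ exists a : R[i], eigenvalue B a /\ `|a| != 1.

Definition torsion_free (R : realType) (G : set (mx3 R)) : Prop :=
  forall A (n : nat), G A -> (0 < n)%N -> peq (A ^+ n) 1 -> peq A 1.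

Definition non_commutative (R : realType) (G : set (mx3 R)) : Prop :=
  exists A B, G A /\ G B /\ ~ peq (A *m B) (B *m A).

(* Discreteness in PSL(3,C) (quotient topology of SL(3,C) -> PSL(3,C)):
   every element has a neighbourhood containing no other element of G. *)
Definition SL_part (R : realType) (G : set (mx3 R)) : set (mx3 R) :=
  [set B | G B /\ \det B = 1].

Definition pdiscrete (R : realType) (G : set (mx3 R)) : Prop :=
  forall B, SL_part G B ->
    exists U : set (mx3 R), nbhs B U /\
      (forall B', U B' -> SL_part G B' -> peq B' B).

(* Open subsets of CP^2 are represented by their preimages in C^3 \ {0}:
   open cones of nonzero vectors. *)
Definition open_cone (R : realType) (W : set (cv3 R)) : Prop :=
  [/\ open W, ~ W 0 & forall v (l : R[i]), W v -> l != 0 -> W (l *: v)].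

Definition invariant (R : realType) (G : set (mx3 R)) (W : set (cv3 R)) : Prop :=
  forall A v, G A -> W v -> W (A *m v).

(* Proper discontinuity on W: for every compact K of the projective set
   (every compact of CP^2 inside W is the image of a compact of C^3 inside
   the cone W), only finitely many elements gamma of G (finitely many classes
   in PSL(3,C)) satisfy gamma K /\ K <> empty. *)
Definition prop_discontinuous (R : realType) (G : set (mx3 R)) (W : set (cv3 R)) : Prop :=
  forall K : set (cv3 R), compact K -> K `<=` W ->
    exists L : seq (mx3 R), forall A, G A ->
      (exists v w (l : R[i]), K v /\ K w /\ A *m v = l *: w) ->
      exists2 B, B \in L & peq A B.

Definition complex_kleinian (R : realType) (G : set (mx3 R)) : Prop :=
  [/\ is_pgroup G, pdiscrete G &
      exists W : set (cv3 R), open_cone W /\ W !=set0 /\ invariant G W /\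
        prop_discontinuous G W].

Definition group_rank (R : realType) (G : set (mx3 R)) (n : nat) : Prop :=
  (exists s : seq (mx3 R), size s = n /\ (forall A, pgen [set` s] A <-> G A)) /\
  (forall s : seq (mx3 R), (forall A, pgen [set` s] A <-> G A) -> (n <= size s)%N).

Definition unip (R : realType) (a b e : R[i]) : mx3 R :=
  \matrix_(i < 3, j < 3)
    (if i == j then 1
     else if ((i : nat) == 0%N) && ((j : nat) == 1%N) then a
     else if ((i : nat) == 0%N) && ((j : nat) == 2%N) then b
     else if ((i : nat) == 1%N) && ((j : nat) == 2%N) then e
     else 0).

Definition g_st (R : realType) (s t : R[i]) : mx3 R := unip s t 0.

Definition Gamma_w (R : realType) (x y : R[i]) (p q r : int) : set (mx3 R) :=
  pgen [set g_st 1 0; g_st (p%:~R / q%:~R) (r%:~R)^-1; unip x y 1].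

Definition Gamma_p (R : realType) (G : set (mx3 R)) : set (mx3 R) :=
  pgen [set A | G A /\ parabolic A].

Definition pconjugate (R : realType) (G H : set (mx3 R)) : Prop :=
  exists P : mx3 R, P \in unitmx /\ (forall A, G A <-> H (P *m A *m invmx P)).

(* Main.v *)
Require Import Defs.
From HB Require Import structures.
From mathcomp Require Import all_boot all_order all_algebra.
From mathcomp Require Import all_classical all_reals all_analysis.
From mathcomp Require Import complex.
From mathcomp Require Import ring lra.
Import Order.TTheory GRing.Theory Num.Theory.
Local Open Scope ring_scope.
Local Open Scope classical_set_scope.


Section S.
Variable R : realType.
Local Notation C := (R[i]).

Lemma mulmx3 m n (A : 'M[C]_(m, 3)) (B : 'M[C]_(3, n)) i j :
  (A *m B) i j = A i 0 * B 0 j + A i 1 * B 1 j + A i 2%:R * B 2%:R j.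
Proof.
rewrite mxE !big_ord_recr big_ord0 /= add0r.
have -> : widen_ord (leqnSn 2) (widen_ord (leqnSn 1) ord_max) = 0 :> 'I_3 by apply/val_inj.
have -> : widen_ord (leqnSn 2) ord_max = 1 :> 'I_3 by apply/val_inj.
have -> : ord_max = 2%:R :> 'I_3 by apply/val_inj.
by [].
Qed.

Lemma unipM (a b e a' b' e' : C) :
  unip a b e *m unip a' b' e' = unip (a + a') (b + b' + a * e') (e + e').
Proof.
apply/matrixP => i j; rewrite mulmx3 !mxE.
case: i => [[|[|[|i]]]] //= Hi; case: j => [[|[|[|j]]]] //= Hj; ring.
Qed.

Lemma invmx_uniq (A X : mx3 R) : A *m X = 1%:M -> invmx A = X.
Proof.
move=> H; have [uA _] := mulmx1_unit H.
by rewrite -[invmx A]mulmx1 -H mulmxA mulVmx ?mul1mx.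
Qed.

Lemma invmxM3 (A B : mx3 R) : A \in unitmx -> B \in unitmx ->
  invmx (A *m B) = invmx B *m invmx A.
Proof.
move=> uA uB; apply: invmx_uniq.
by rewrite mulmxA -(mulmxA A) mulmxV // mulmx1 mulmxV.
Qed.

Lemma unip0 : unip 0 0 0 = 1%:M :> mx3 R.
Proof.
apply/matrixP => i j; rewrite !mxE.
by case: i => [[|[|[|i]]]] //= Hi; case: j => [[|[|[|j]]]] //= Hj.
Qed.

Lemma unip_inv (a b e : C) : unip a b e *m unip (-a) (a * e - b) (-e) = 1%:M.
Proof.
rewrite unipM -unip0; congr unip; ring.
Qed.

Lemma unip_unit (a b e : C) : unip a b e \in unitmx.
Proof. by have [] := mulmx1_unit (unip_inv a b e). Qed.

Lemma invmx_unip (a b e : C) : invmx (unip a b e) = unip (-a) (a * e - b) (-e).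
Proof. exact/invmx_uniq/unip_inv. Qed.

Lemma ord3 (i : 'I_3) : i = 0 \/ i = 1 \/ i = 2%:R.
Proof.
case: i => [[|[|[|i]]]] Hi //.
- by left; apply/val_inj.
- by right; left; apply/val_inj.
- by right; right; apply/val_inj.
Qed.

Lemma mx3P (A B : mx3 R) :
  A 0 0 = B 0 0 -> A 0 1 = B 0 1 -> A 0 2%:R = B 0 2%:R ->
  A 1 0 = B 1 0 -> A 1 1 = B 1 1 -> A 1 2%:R = B 1 2%:R ->
  A 2%:R 0 = B 2%:R 0 -> A 2%:R 1 = B 2%:R 1 -> A 2%:R 2%:R = B 2%:R 2%:R -> A = B.
Proof.
move=> *; apply/matrixP => i j.
by case: (ord3 i) => [->|[->|->]]; case: (ord3 j) => [->|[->|->]].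
Qed.

Lemma det3_trig (T : mx3 R) : T 1 0 = 0 -> T 2%:R 0 = 0 -> T 2%:R 1 = 0 ->
  \det T = T 0 0 * T 1 1 * T 2%:R 2%:R.
Proof.
move=> h10 h20 h21; rewrite -det_tr det_trig.
  rewrite !big_ord_recr big_ord0 /= mul1r !mxE.
  have -> : widen_ord (leqnSn 2) (widen_ord (leqnSn 1) ord_max) = 0 :> 'I_3 by apply/val_inj.
  have -> : widen_ord (leqnSn 2) ord_max = 1 :> 'I_3 by apply/val_inj.
  by have -> : ord_max = 2%:R :> 'I_3 by apply/val_inj.
apply/is_trig_mxP => i j; rewrite mxE.
by case: (ord3 i) => [->|[->|->]]; case: (ord3 j) => [->|[->|->]].
Qed.

Lemma cancel_eig (u b a : C) : u * b = a * u -> a != b -> u = 0.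
Proof.
move=> h ab; apply/eqP; move: h => /eqP.
rewrite [a * u]mulrC -subr_eq0 -mulrBr mulf_eq0 => /orP [//|].
by rewrite subr_eq0 eq_sym (negbTE ab).
Qed.

Lemma eigen3_trig (T : mx3 R) a : T 1 0 = 0 -> T 2%:R 0 = 0 -> T 2%:R 1 = 0 ->
  eigenvalue T a -> [\/ a = T 0 0, a = T 1 1 | a = T 2%:R 2%:R].
Proof.
move=> h10 h20 h21 /eigenvalueP [v ev vn0].
have E0 := congr1 (fun M : 'rV_3 => M 0 0) ev.
have E1 := congr1 (fun M : 'rV_3 => M 0 1) ev.
have E2 := congr1 (fun M : 'rV_3 => M 0 2%:R) ev.
rewrite !mulmx3 !mxE h10 h20 h21 !mulr0 !addr0 in E0 E1 E2.
have [a0|a0] := eqVneq a (T 0 0); first by constructor 1.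
have [a1|a1] := eqVneq a (T 1 1); first by constructor 2.
have [a2|a2] := eqVneq a (T 2%:R 2%:R); first by constructor 3.
exfalso; move/negP: vn0; apply.
have v0 : v 0 0 = 0.
  exact: (@cancel_eig _ _ _ E0 a0).
rewrite v0 !mul0r !add0r in E1 E2.
have v1 : v 0 1 = 0.
  exact: (@cancel_eig _ _ _ E1 a1).
rewrite v1 !mul0r !add0r in E2.
have v2 : v 0 2%:R = 0.
  exact: (@cancel_eig _ _ _ E2 a2).
apply/eqP/matrixP => i j; rewrite mxE (ord1 i).
by case: (ord3 j) => [->|[->|->]].
Qed.

End S.


Section W.
Variable R : realType.
Local Notation C := (R[i]).
Variables (x y : C) (p q r : int).
Hypotheses (hq : q != 0) (hr : r != 0).

Definition Winv (M : mx3 R) := exists (l : C) (e k m : int), l != 0 /\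
  M = l *: unip (k%:~R / q%:~R + e%:~R * x)
     (m%:~R / (q%:~R * r%:~R) + e%:~R * y + x * (e%:~R * (e%:~R - 1) / 2)) e%:~R.

Lemma Winv_all M : Gamma_w x y p q r M -> Winv M.
Proof.
have qC : q%:~R != 0 :> C by rewrite intr_eq0.
have rC : r%:~R != 0 :> C by rewrite intr_eq0.
have twoC : 2 != 0 :> C by rewrite pnatr_eq0.
elim => {M}.
- move=> a a0; exists a, 0, 0, 0; split => //.
  rewrite (_ : unip _ _ _ = 1%:M); first by rewrite -mul_scalar_mx mulmx1.
  rewrite -unip0; congr unip; rewrite ?rmorph0; field => //; by rewrite ?qC ?rC ?twoC ?mulf_neq0.
- move=> A [[->|->]|->].
  + exists 1, 0, q, 0; split; first exact: oner_neq0.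
    rewrite scale1r /g_st; congr unip; rewrite ?rmorph0; field => //; by rewrite ?qC ?rC ?twoC ?mulf_neq0.
  + exists 1, 0, p, q; split; first exact: oner_neq0.
    rewrite scale1r /g_st; congr unip; rewrite ?rmorph0; field => //; by rewrite ?qC ?rC ?twoC ?mulf_neq0.
  + exists 1, 1, 0, 0; split; first exact: oner_neq0.
    rewrite scale1r; congr unip; rewrite ?rmorph0 ?rmorph1; field => //; by rewrite ?qC ?rC ?twoC ?mulf_neq0.
- move=> A B _ [l [e [k [m [l0 ->]]]]] _ [l' [e' [k' [m' [l0' ->]]]]].
  exists (l * l'), (e + e'), (k + k'), (m + m' + k * e' * r); split.
    by rewrite mulf_neq0.
  rewrite -scalemxAl -scalemxAr scalerA unipM; congr (_ *: unip _ _ _);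
    rewrite ?rmorphD ?rmorphM /=; field => //; by rewrite ?qC ?rC ?twoC ?mulf_neq0.
- move=> A _ [l [e [k [m [l0 ->]]]]].
  exists l^-1, (- e), (- k), (- m + k * e * r); split.
    by rewrite invr_eq0.
  rewrite invmxZ ?unitmxZ ?unitfE ?unip_unit // invmx_unip; congr (_ *: unip _ _ _);
    rewrite ?rmorphD ?rmorphN ?rmorphM /=; field => //; by rewrite ?qC ?rC ?twoC ?mulf_neq0.
Qed.
End W.


Section G.
Variable R : realType.

Lemma bernoulliR (d : R) (n : nat) : 0 <= d -> 1 + n%:R * d <= (1 + d) ^+ n.
Proof.
move=> d0; elim: n => [|n IH]; first by rewrite expr0 mul0r addr0.
rewrite exprS -natr1.
have h1 : 0 <= (1 + d) by rewrite addr_ge0.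
have h2 := ler_wpM2l h1 IH.
apply: (le_trans _ h2).
have hn : 0 <= (n%:R : R) := ler0n _ _.
have := mulr_ge0 hn (mulr_ge0 d0 d0).
move: (n%:R : R) hn h2 => N *; nra.
Qed.

Lemma growR_aux (rho eps : R) : 0 < eps -> 1 < rho ->
  (forall n, eps <= rho^-1 ^+ n) -> False.
Proof.
move=> e0 r1 H.
set d := rho - 1.
have d0 : 0 < d by rewrite subr_gt0.
have e1 : 1 + d = rho by rewrite /d addrCA subrr addr0.
clearbody d.
set K := (eps * d)^-1.
have K0 : 0 <= K by rewrite invr_ge0 ltW // mulr_gt0.
have hb := archi_boundP K0.
set n := Num.bound K in hb.
have := H n; rewrite exprVn.
have rn : 0 < rho ^+ n by rewrite exprn_gt0 // (lt_trans ltr01).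
move=> h.
have hinv : rho ^+ n * (rho ^+ n)^-1 = 1 by rewrite mulfV // gt_eqF.
have := @bernoulliR d n (ltW d0).
rewrite e1 => hb2.
have hK : K * (eps * d) = 1 by rewrite mulVf // gt_eqF // mulr_gt0.
have ed : 0 < eps * d by rewrite mulr_gt0.
move: hb h hb2 hinv rn hK ed; set N := (n%:R : R); set w := (rho ^+ n)^-1; set z := rho ^+ n.
move=> hb h hb2 hinv rn hK ed.
have p1 : 0 <= z * (w - eps) by apply: mulr_ge0; [exact: ltW | lra].
have p2 : 0 <= eps * (z - 1 - N * d) by apply: mulr_ge0; [exact: ltW | lra].
have p3 : 0 < eps * d * (N - K) by apply: mulr_gt0; [exact: ed | lra].
nra.
Qed.

Lemma growR (rho eps : R) : 0 < eps -> 0 < rho ->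
  (forall n, eps <= rho ^+ n) -> (forall n, eps <= rho^-1 ^+ n) -> rho = 1.
Proof.
move=> e0 r0 H1 H2.
case: (ltgtP rho 1) => // h.
- exfalso; apply: (@growR_aux rho^-1 eps e0).
    by rewrite invf_gt1.
  by move=> n; rewrite invrK.
- exfalso; exact: (@growR_aux rho eps e0 h H2).
Qed.
End G.

Section GC.
Variable R : realType.
Local Notation C := (R[i]).

Lemma norm_int_ge1 (m : int) : m != 0 -> 1 <= `|m%:~R : C|.
Proof. by move=> m0; rewrite -intr_norm ler1z -gtz0_ge1 normr_gt0. Qed.

Lemma normC_real (z : C) : exists rho : R, `|z| = (rho%:C)%C /\ (z != 0 -> 0 < rho).
Proof.
exists (Num.sqrt (complex.Re z ^+ 2 + complex.Im z ^+ 2)); split; first exact: normc_def.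
by move=> z0; rewrite -ltcR -normc_def normr_gt0.
Qed.

Lemma lower_bound (z : C) (m N : int) : z != 0 -> N != 0 -> z = m%:~R / N%:~R ->
  `|N%:~R : C|^-1 <= `|z|.
Proof.
move=> z0 N0 ez.
have m0 : m != 0.
  by apply: contraNneq z0 => m0; rewrite ez m0 mul0r.
rewrite ez normrM normfV ler_pdivlMr ?normr_gt0 ?intr_eq0 //.
rewrite mulrC divff ?normr_eq0 ?intr_eq0 //.
exact: norm_int_ge1.
Qed.

Lemma growC (lam : C) (N : int) : lam != 0 -> N != 0 ->
  (forall n, exists m : int, lam ^+ n = m%:~R / N%:~R) ->
  (forall n, exists m : int, lam^-1 ^+ n = m%:~R / N%:~R) -> `|lam| = 1.
Proof.
move=> l0 N0 H1 H2.
have [rho [erho rho0]] := normC_real lam.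
have {}rho0 := rho0 l0.
set eps : R := ((`|N|%:~R : R))^-1.
have eeps : (eps%:C)%C = `|N%:~R : C|^-1 by rewrite fmorphV rmorph_int intr_norm.
have e0 : 0 < eps by rewrite invr_gt0 ltr0z normr_gt0.
suff h1 : rho = 1 by rewrite erho h1.
apply: (@growR _ rho eps e0 rho0) => n.
- have [m em] := H1 n.
  have := @lower_bound _ _ _ (expf_neq0 n l0) N0 em.
  by rewrite -eeps normrX erho -rmorphXn lecR.
- have [m em] := H2 n.
  have := @lower_bound _ _ _ (expf_neq0 n (invr_neq0 l0)) N0 em.
  by rewrite -eeps normrX normfV erho -fmorphV -rmorphXn lecR.
Qed.
End GC.


Section M.
Variable R : realType.
Local Notation C := (R[i]).
Variables (x y : C) (p q r : int).
Hypotheses (hq : q != 0) (hr : r != 0).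
Local Notation Gw := (Gamma_w x y p q r).

Lemma Gw_unip M : Gw M -> exists l s t (e : int), l != 0 /\ M = l *: unip s t e%:~R.
Proof.
move=> /(@Winv_all _ x y p q r hq hr M) [l [e [k [m [l0 ->]]]]].
by exists l, (k%:~R / q%:~R + e%:~R * x), (m%:~R / (q%:~R * r%:~R) + e%:~R * y + x * (e%:~R * (e%:~R - 1) / 2)), e.
Qed.

Lemma Gw_center t : Gw (unip 0 t 0) -> exists m : int, t = m%:~R / (q%:~R * r%:~R).
Proof.
move=> /(@Winv_all _ x y p q r hq hr _) [l [e [k [m [l0 E]]]]].
have E00 := congr1 (fun M : mx3 R => M 0 0) E.
have E12 := congr1 (fun M : mx3 R => M 1 2%:R) E.
have E01 := congr1 (fun M : mx3 R => M 0 1) E.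
have E02 := congr1 (fun M : mx3 R => M 0 2%:R) E.
rewrite !mxE /= in E00 E12 E01 E02.
rewrite mulr1 in E00; rewrite -E00 !mul1r in E12 E02.
exists m; rewrite E02 -E12; ring.
Qed.

Lemma Gw_g10 : Gw (unip 1 0 0).
Proof. by apply: pgen_gen; left; left. Qed.

Lemma Gw_U : Gw (unip x y 1).
Proof. by apply: pgen_gen; right. Qed.

Lemma Gw_g01 : Gw (unip 0 1 0).
Proof.
have -> : unip 0 1 0 = unip 1 0 0 *m unip x y 1 *m invmx (unip 1 0 0) *m invmx (unip x y 1) :> mx3 R.
  by rewrite !invmx_unip !unipM; congr unip; ring.
apply: pgen_mul; last exact/pgen_inv/Gw_U.
apply: pgen_mul; last exact/pgen_inv/Gw_g10.
exact: pgen_mul Gw_g10 Gw_U.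
Qed.

Lemma fix1 (a l : C) : a = a * l -> a = 0 \/ l = 1.
Proof.
move=> h; have : a * (l - 1) = 0 by rewrite mulrBr -h mulr1 subrr.
move/eqP; rewrite mulf_eq0 => /orP [/eqP -> | ]; [by left | by rewrite subr_eq0 => /eqP; right].
Qed.

Variable T : mx3 R.
Hypothesis hTu : T \in unitmx.
Hypothesis hN1 : forall h, Gw h -> Gw (T *m h *m invmx T).
Hypothesis hN2 : forall h, Gw h -> Gw (invmx T *m h *m T).

Lemma col0 : T 1 0 = 0 /\ T 2%:R 0 = 0.
Proof.
have [l [s [t [e [l0 E]]]]] := @Gw_unip _ (hN2 _ Gw_g10).
have [l' [s' [t' [e' [l0' E']]]]] := @Gw_unip _ (hN2 _ Gw_U).
have F : unip 1 0 0 *m T = T *m (l *: unip s t e%:~R) by rewrite -E !mulmxA mulmxV // mul1mx.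
have F' : unip x y 1 *m T = T *m (l' *: unip s' t' e'%:~R) by rewrite -E' !mulmxA mulmxV // mul1mx.
have F00 := congr1 (fun M : mx3 R => M 0 0) F.
have F10 := congr1 (fun M : mx3 R => M 1 0) F.
have F20 := congr1 (fun M : mx3 R => M 2%:R 0) F.
have F'00 := congr1 (fun M : mx3 R => M 0 0) F'.
have F'10 := congr1 (fun M : mx3 R => M 1 0) F'.
have F'20 := congr1 (fun M : mx3 R => M 2%:R 0) F'.
rewrite !mulmx3 !mxE /= in F00 F10 F20 F'00 F'10 F'20.
rewrite !(mul0r, mul1r, mulr0, mulr1, add0r, addr0) in F00 F10 F20 F'00 F'10 F'20.
have h20 : T 2%:R 0 = 0.
  case: (fix1 _ _ F'20) => // l1.
  by rewrite -(addKr (T 1 0) (T 2%:R 0)) F'10 l1 mulr1 addNr.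
split => //.
case: (fix1 _ _ F10) => // l1.
by rewrite -(addKr (T 0 0) (T 1 0)) F00 l1 mulr1 addNr.
Qed.

Lemma row2 : T 2%:R 0 = 0 /\ T 2%:R 1 = 0.
Proof.
have [l [s [t [e [l0 E]]]]] := @Gw_unip _ (hN1 _ Gw_g10).
have [l' [s' [t' [e' [l0' E']]]]] := @Gw_unip _ (hN1 _ Gw_U).
have F : (l *: unip s t e%:~R) *m T = T *m unip 1 0 0 by rewrite -E mulmxKV.
have F' : (l' *: unip s' t' e'%:~R) *m T = T *m unip x y 1 by rewrite -E' mulmxKV.
have F0 := congr1 (fun M : mx3 R => M 2%:R 0) F.
have F1 := congr1 (fun M : mx3 R => M 2%:R 1) F.
have F'1 := congr1 (fun M : mx3 R => M 2%:R 1) F'.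
have F'2 := congr1 (fun M : mx3 R => M 2%:R 2%:R) F'.
rewrite !mulmx3 !mxE /= in F0 F1 F'1 F'2.
rewrite !(mul0r, mul1r, mulr0, mulr1, add0r, addr0) in F0 F1 F'1 F'2.
have h20 : T 2%:R 0 = 0.
  case: (fix1 _ _ (esym (etrans (mulrC _ _) F0))) => // l1.
  by rewrite -(addrK (T 2%:R 1) (T 2%:R 0)) -F1 l1 mul1r subrr.
split => //.
rewrite h20 !(mul0r, mulr0, add0r) in F'1 F'2.
case: (fix1 _ _ (esym (etrans (mulrC _ _) F'1))) => // l1.
by rewrite -(addrK (T 2%:R 2%:R) (T 2%:R 1)) -F'2 l1 mul1r subrr.
Qed.
Hypothesis hdet : \det T = 1.

Lemma diag_nz : [/\ T 0 0 != 0, T 1 1 != 0 & T 2%:R 2%:R != 0].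
Proof.
have [h10 h20] := col0; have [_ h21] := row2.
move: hdet; rewrite det3_trig // => h.
have : T 0 0 * T 1 1 * T 2%:R 2%:R != 0 by rewrite h oner_neq0.
by rewrite !mulf_eq0 !negb_or => /andP [/andP [-> ->] ->].
Qed.

Lemma ratio_e : exists e e' : int, T 1 1 = e%:~R * T 2%:R 2%:R /\ T 2%:R 2%:R = e'%:~R * T 1 1.
Proof.
have [h10 h20] := col0; have [_ h21] := row2.
have [n0 n1 n2] := diag_nz.
have [l [s [t [e [l0 E]]]]] := @Gw_unip _ (hN1 _ Gw_U).
have [l' [s' [t' [e' [l0' E']]]]] := @Gw_unip _ (hN2 _ Gw_U).
have F : (l *: unip s t e%:~R) *m T = T *m unip x y 1 by rewrite -E mulmxKV.
have F' : unip x y 1 *m T = T *m (l' *: unip s' t' e'%:~R) by rewrite -E' !mulmxA mulmxV // mul1mx.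
have F00 := congr1 (fun M : mx3 R => M 0 0) F.
have F12 := congr1 (fun M : mx3 R => M 1 2%:R) F.
have F'00 := congr1 (fun M : mx3 R => M 0 0) F'.
have F'12 := congr1 (fun M : mx3 R => M 1 2%:R) F'.
rewrite !mulmx3 !mxE /= ?h10 ?h20 ?h21 in F00 F12 F'00 F'12.
rewrite !(mul0r, mul1r, mulr0, mulr1, add0r, addr0) in F00 F12 F'00 F'12.
have l1 : l = 1.
  by case: (fix1 _ _ (esym (etrans (mulrC _ _) F00))) => // h; rewrite h eqxx in n0.
have l1' : l' = 1.
  by case: (fix1 _ _ F'00) => // h; rewrite h eqxx in n0.
rewrite l1 !mul1r in F12; rewrite l1' !mul1r mulr1 in F'12.
exists e, e'; split.
  by apply: (addrI (T 1 2%:R)); rewrite F12 addrC.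
by apply: (addrI (T 1 2%:R)); rewrite F'12 addrC mulrC.
Qed.
Lemma center1 t : Gw (unip 0 t 0) -> Gw (unip 0 (T 0 0 / T 2%:R 2%:R * t) 0).
Proof.
have [h10 h20] := col0; have [_ h21] := row2.
have [n0 n1 n2] := diag_nz.
move=> /hN1 H.
suff E : T *m unip 0 t 0 = unip 0 (T 0 0 / T 2%:R 2%:R * t) 0 *m T.
  by move: H; rewrite E mulmxK.
by apply: mx3P; rewrite !mulmx3 !mxE /= ?h10 ?h20 ?h21; field.
Qed.

Lemma center2 t : Gw (unip 0 t 0) -> Gw (unip 0 (T 2%:R 2%:R / T 0 0 * t) 0).
Proof.
have [h10 h20] := col0; have [_ h21] := row2.
have [n0 n1 n2] := diag_nz.
move=> /hN2 H.
suff E : unip 0 t 0 *m T = T *m unip 0 (T 2%:R 2%:R / T 0 0 * t) 0.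
  by move: H; rewrite -mulmxA E mulKmx.
by apply: mx3P; rewrite !mulmx3 !mxE /= ?h10 ?h20 ?h21; field.
Qed.

Lemma pow1 n : Gw (unip 0 ((T 0 0 / T 2%:R 2%:R) ^+ n) 0).
Proof.
elim: n => [|n IH]; first by rewrite expr0; exact: Gw_g01.
by rewrite exprS; apply: center1.
Qed.

Lemma pow2 n : Gw (unip 0 ((T 0 0 / T 2%:R 2%:R)^-1 ^+ n) 0).
Proof.
elim: n => [|n IH]; first by rewrite expr0; exact: Gw_g01.
by rewrite exprS invf_div; rewrite invf_div in IH; apply: center2.
Qed.

Lemma all_unit a : eigenvalue T a -> `|a| = 1.
Proof.
have [h10 h20] := col0; have [_ h21] := row2.
have [n0 n1 n2] := diag_nz.
have [e [e' [E1 E2]]] := ratio_e.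
have e0 : e != 0 by apply: contraNneq n1 => ee; rewrite E1 ee mul0r.
have e0' : e' != 0 by apply: contraNneq n2 => ee; rewrite E2 ee mul0r.
have N11 : `|T 1 1| = `|T 2%:R 2%:R|.
  apply/le_anti/andP; split.
    rewrite E2 normrM -{1}[`|T 1 1|]mul1r ler_wpM2r //.
    exact: norm_int_ge1.
  rewrite E1 normrM -{1}[`|T 2%:R 2%:R|]mul1r ler_wpM2r //.
  exact: norm_int_ge1.
have lam0 : T 0 0 / T 2%:R 2%:R != 0 by rewrite mulf_neq0 ?invr_eq0.
have qr0 : q * r != 0 by rewrite mulf_neq0.
have G := @growC _ _ _ lam0 qr0.
have N00 : `|T 0 0| = `|T 2%:R 2%:R|.
  have : `|T 0 0 / T 2%:R 2%:R| = 1.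
    apply: G => n.
    - have [m hm] := Gw_center _ (pow1 n); exists m; by rewrite hm rmorphM.
    - have [m hm] := Gw_center _ (pow2 n); exists m; by rewrite hm rmorphM.
  rewrite normrM normfV => h.
  by rewrite -[LHS](divfK (_ : `|T 2%:R 2%:R| != 0)) ?h ?mul1r // normr_eq0.
have N22 : `|T 2%:R 2%:R| = 1.
  have : `|T 2%:R 2%:R| ^+ 3 = 1.
    have -> : `|T 2%:R 2%:R| ^+ 3 = `|T 0 0| * `|T 1 1| * `|T 2%:R 2%:R|.
      by rewrite N00 N11 !exprS expr0 mulr1 mulrA.
    by rewrite -!normrM -det3_trig // hdet normr1.
  by move/eqP; rewrite pexpr_eq1 // => /eqP.
by case/(@eigen3_trig _ _ _ h10 h20 h21) => ->; rewrite ?N00 ?N11.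
Qed.
End M.


Section N.
Variable R : realType.
Local Notation C := (R[i]).

Lemma conj_eig (B Q : mx3 R) a : Q \in unitmx -> eigenvalue B a ->
  eigenvalue (Q *m B *m invmx Q) a.
Proof.
move=> Qu /eigenvalueP [v hv v0]; apply/eigenvalueP; exists (v *m invmx Q).
  by rewrite !mulmxA mulmxKV // hv -scalemxAl.
by apply: contraNneq v0 => h; rewrite -(mulmxKV Qu v) h mul0mx.
Qed.

Lemma conj_diag (B Q : mx3 R) : Q \in unitmx ->
  diagonalizable (Q *m B *m invmx Q) -> diagonalizable B.
Proof.
move=> Qu [P' P'u hd]; exists (P' *m Q); first by rewrite unitmx_mul P'u.
have PQu : P' *m Q \in unitmx by rewrite unitmx_mul P'u.
move: hd; rewrite /similar_to (conjumx _ P'u) (conjumx _ PQu) invmxM3 // !mulmxA.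
by [].
Qed.

Lemma pgen_unit (S : set (mx3 R)) X : (forall A, S A -> A \in unitmx) ->
  pgen S X -> X \in unitmx.
Proof.
move=> hS; elim => {X}.
- by move=> a a0; rewrite unitmxE det_scalar unitfE expf_neq0.
- exact: hS.
- by move=> A B _ uA _ uB; rewrite unitmx_mul uA.
- by move=> A _ uA; rewrite unitmx_inv.
Qed.

Variable G : set (mx3 R).
Hypothesis hpg : is_pgroup G.
Variable Cm : mx3 R.
Hypotheses (GC : G Cm) (GCi : G (invmx Cm)).

Lemma norm_p X : Gamma_p G X -> Gamma_p G (Cm *m X *m invmx Cm).
Proof.
case: hpg => hunit hscal hmul hinv.
have Cu : Cm \in unitmx := hunit _ GC.
have hu : forall A, [set A | G A /\ parabolic A] A -> A \in unitmx.
  by move=> A [/hunit].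
elim => {X}.
- by move=> a a0; rewrite scalar_mxC mulmxK //; apply: pgen_scalar.
- move=> A [GA [B' [[dB' [l' eB']] [nd eigs]]]].
  apply: pgen_gen; split; first exact: hmul _ _ (hmul _ _ GC GA) GCi.
  exists (Cm *m B' *m invmx Cm); split; [split|split].
  + rewrite !det_mulmx det_inv dB' mulr1 mulfV //.
  + by exists l'; rewrite eB' -scalemxAr -scalemxAl.
  + by move=> hd; apply: nd; exact: conj_diag hd.
  + move=> a' ha'; apply: eigs.
    have Ciu : invmx Cm \in unitmx by rewrite unitmx_inv.
    have := conj_eig _ _ _ Ciu ha'.
    by rewrite invmxK !mulmxA (mulVmx Cu) mul1mx (mulmxKV Cu).
- move=> A B _ hA _ hB.
  have -> : Cm *m (A *m B) *m invmx Cm = (Cm *m A *m invmx Cm) *m (Cm *m B *m invmx Cm).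
    by rewrite !mulmxA mulmxKV.
  exact: pgen_mul.
- move=> A pA hA.
  have uA := pgen_unit _ _ hu pA.
  have -> : Cm *m invmx A *m invmx Cm = invmx (Cm *m A *m invmx Cm).
    by rewrite invmxM3 ?unitmx_mul ?unitmx_inv ?uA ?Cu // invmxK invmxM3 // mulmxA.
  exact: pgen_inv.
Qed.
End N.


Theorem mainTheorem6 (R : realType) (G : set (mx3 R))
  (x y : R[i]) (p q r : int) :
  complex_kleinian G ->
  (forall A, G A -> in_Uplus A) ->
  non_commutative G ->
  torsion_free G ->
  coprimez p q -> q != 0 -> r != 0 -> (q ^+ 2 %| r)%Z ->
  pconjugate (Gamma_p G) (Gamma_w x y p q r) ->
  group_rank (Gamma_w x y p q r) 3 ->
  forall A, G A -> ~ loxodromic A.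
Proof.
move=> [hpg _ _] _ _ _ _ hq hr _ [P [Pu hP]] _ A GA [B [[dB [l eB]] [a [ea na]]]].
have hpg' := hpg.
case: hpg' => hunit hscal hmul hinv.
have l0 : l != 0.
  apply/eqP => l00; move: dB; rewrite eB l00 scale0r det0 => /eqP.
  by rewrite eq_sym oner_eq0.
have GB : G B by rewrite eB -mul_scalar_mx; exact: hmul _ _ (hscal _ l0) GA.
have Bu : B \in unitmx := hunit _ GB.
have GBi : G (invmx B) := hinv _ GB.
have GBii : G (invmx (invmx B)) by rewrite invmxK.
set T := P *m B *m invmx P.
have Tu : T \in unitmx by rewrite !unitmx_mul Pu Bu unitmx_inv Pu.
have iT : invmx T = P *m invmx B *m invmx P.
  by rewrite !invmxM3 ?unitmx_mul ?unitmx_inv ?Pu ?Bu // invmxK mulmxA.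
have back : forall h, Gamma_w x y p q r h -> Gamma_p G (invmx P *m h *m P).
  move=> h hh; apply/hP.
  by rewrite !mulmxA (mulmxV Pu) mul1mx (mulmxK Pu).
have hN1 : forall h, Gamma_w x y p q r h -> Gamma_w x y p q r (T *m h *m invmx T).
  move=> h /back /(@norm_p _ _ hpg _ GB GBi _) /hP.
  by rewrite iT /T !mulmxA.
have hN2 : forall h, Gamma_w x y p q r h -> Gamma_w x y p q r (invmx T *m h *m T).
  move=> h /back /(@norm_p _ _ hpg _ GBi GBii _) /hP.
  by rewrite iT /T invmxK !mulmxA.
have dT : \det T = 1.
  by rewrite /T !det_mulmx det_inv dB mulr1 mulfV // -unitfE -unitmxE.
have eT : eigenvalue T a := @conj_eig _ _ _ _ Pu ea.
have := @all_unit _ _ _ _ _ _ hq hr _ Tu hN1 hN2 dT _ eT.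
by move=> h; rewrite h eqxx in na.
Qed.
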